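(* Let $k\geq 1$, let $G$ be a connected graph, and let $e=(u,v)\in E(G)$ be a bridge of $G$. Suppose there is a maximum $k$-edge-colorable subgraph $H_k$ of $G$ with $e\in E(H_k)$. Let $G_1,G_2$ be the two components of $G-e$, and let $G_1e$, $G_2e$ be the graphs obtained from $G_1$, $G_2$ respectively by adding the edge $e$ together with its endpoint not in the component (so $E(G_ie)=E(G_i)\cup\{e\}$). Then $\nu_{k}(G)=\nu_{k}(G_{1}e)+\nu_{k}(G_{2}e)-1$.
   Context: Graphs are finite, without loops, possibly with multiple edges. $\nu_k(G)$ is the maximum number of edges of a $k$-edge-colorable subgraph of $G$; a maximum $k$-edge-colorable subgraph is one attaining $\nu_k(G)$ edges. A bridge is an edge whose removal increases the number of connected components. *)

(* Defs.v *)
From mathcomp Require Import all_boot.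
Set Implicit Arguments. Unset Strict Implicit. Unset Printing Implicit Defensive.

(* A finite loopless multigraph: vertex type V, edge type E, each edge f has
   endpoints src f and dst f (with src f != dst f).  Parallel edges allowed. *)

Section Graphs.
Variables (V E : finType) (src dst : E -> V).

Definition loopless : Prop := forall f : E, src f != dst f.

Definition incident (f : E) (x : V) : bool := (src f == x) || (dst f == x).

Definition share_end (f g : E) : bool :=
  incident g (src f) || incident g (dst f).

Definition adjS (S : {set E}) : rel V :=
  fun x y => [exists f in S, ((src f == x) && (dst f == y)) ||
                             ((src f == y) && (dst f == x))].

Definition ncomp (S : {set E}) : nat := n_comp (adjS S) predT.

Definition connected_graph : Prop := ncomp [set: E] = 1.

Definition is_bridge (e : E) : Prop := ncomp ([set: E] :\ e) > ncomp [set: E].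

Definition k_colorableb (k : nat) (F : {set E}) : bool :=
  [exists c : {ffun E -> 'I_k}, [forall f in F, forall g in F,
     (f != g) ==> share_end f g ==> (c f != c g)]].

Definition nu (k : nat) (S : {set E}) : nat :=
  \max_(F : {set E} | (F \subset S) && k_colorableb k F) #|F|.

Definition max_k_col_sub (k : nat) (H : {set E}) : Prop :=
  k_colorableb k H /\ #|H| = nu k [set: E].

(* Edge set of G_1 e : the edges of the component of G - e containing x,
   together with e.  (G_1e has vertex set V(G_1) ∪ {other endpoint of e};
   nu_k depends only on the edge set.) *)
Definition side_e (e : E) (x : V) : {set E} :=
  e |: [set f | (f != e) && connect (adjS ([set: E] :\ e)) x (src f)].

End Graphs.

(* Main.v *)
Require Import Defs.
From mathcomp Require Import all_boot zify.
Set Implicit Arguments. Unset Strict Implicit. Unset Printing Implicit Defensive.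

Lemma csym (T : finType) (r : rel T) : symmetric r -> connect_sym r.
Proof.
move=> sr; apply: symmetric_from_pre => x y /connectP[p pp ->].
elim: p x pp => //= z p IH x /andP[rxz pz].
apply: connect_trans (IH _ pz) _; by rewrite connect1 // sr.
Qed.

Lemma cind (T : finType) (r : rel T) (P : T -> bool) x y :
  P x -> (forall a b, P a -> r a b -> P b) -> connect r x y -> P y.
Proof.
move=> Px H /connectP[p pp ->]; elim: p x Px pp => //= z p IH x Px /andP[rxz pz].
exact: IH (H _ _ Px rxz) pz.
Qed.

Definition sw k (a b : 'I_k) (x : 'I_k) := if x == a then b else if x == b then a else x.

Lemma sw_inj k (a b : 'I_k) : injective (sw a b).
Proof.
move=> x y; rewrite /sw.
case: (x =P a); case: (y =P a); case: (x =P b); case: (y =P b) => //= *; subst => //.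
Qed.

Lemma swL k (a b : 'I_k) : sw a b a = b.
Proof. by rewrite /sw eqxx. Qed.

Section G.
Variables (V E : finType) (src dst : E -> V).
Local Notation adjS := (adjS src dst).

Lemma adjS_sym S : symmetric (adjS S).
Proof.
move=> x y; apply/existsP/existsP => -[f /andP[fS h]]; exists f; by rewrite fS orbC.
Qed.

Lemma adjS_mono (S S' : {set E}) : S \subset S' -> subrel (adjS S) (adjS S').
Proof.
move=> sub x y /existsP[f /andP[fS h]]; apply/existsP; exists f.
by rewrite (subsetP sub _ fS).
Qed.

Lemma share_endC f g : share_end src dst f g = share_end src dst g f.
Proof.
rewrite /share_end /incident !(eq_sym (src g)) !(eq_sym (dst g)).
by case: (src f == src g); case: (src f == dst g); case: (dst f == src g); case: (dst f == dst g).
Qed.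


Variable e : E.
Local Notation s := (src e).
Local Notation d := (dst e).
Local Notation R := (connect (adjS (setT :\ e))).
Local Notation R' := (connect (adjS setT)).

Lemma Rsym : connect_sym (adjS (setT :\ e)).
Proof. exact: csym (adjS_sym _). Qed.

Lemma step a b : adjS setT a b ->
  R a b \/ ((a == s) || (a == d)) && ((b == s) || (b == d)).
Proof.
move/existsP=> [f /andP[_ h]]; case: (f =P e) => [fe|fe].
  right; subst f; case/orP: h => /andP[/eqP<- /eqP<-]; by rewrite !eqxx ?orbT.
left; apply: connect1; apply/existsP; exists f.
rewrite !inE h andbT andbT; exact/eqP.
Qed.

Lemma fact1 y : R' s y -> R s y || R d y.
Proof.
apply: (@cind _ _ (fun y => R s y || R d y)) => [|a b Pa /step [Rab|/andP[_ hb]]]; first by rewrite connect0.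
  by case/orP: Pa => H; apply/orP; [left|right]; exact: connect_trans H Rab.
by case/orP: hb => /eqP->; rewrite connect0 ?orbT.
Qed.

Lemma fact2 x y : R s d -> R' x y -> R x y.
Proof.
move=> Rsd; apply: (@cind _ _ (fun y => R x y)) => [|a b Ra /step [Rab|/andP[ha hb]]]; first by rewrite connect0.
  exact: connect_trans Ra Rab.
apply: connect_trans Ra _; case/orP: ha => /eqP->; case/orP: hb => /eqP->;
  by rewrite ?connect0 // Rsym.
Qed.

Lemma bridge_nsd : is_bridge src dst e -> ~~ R s d.
Proof.
move=> hb; apply/negP => Rsd; move: hb; rewrite /is_bridge /ncomp.
rewrite (@eq_n_comp _ (adjS (setT :\ e)) (adjS setT)) ?ltnn //.
move=> x y; apply/idP/idP; last exact: fact2.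
apply: connect_sub => a b h; apply: connect1; exact: adjS_mono (subsetT _) _ _ h.
Qed.

Lemma conn_all : connected_graph src dst -> forall x, R' x s.
Proof.
move=> hc x; apply/negPn/negP => nc; move: hc; rewrite /connected_graph /ncomp /n_comp_mem.
have sym := csym (adjS_sym setT).
suff: 1 < #|predI (roots (adjS setT)) (mem predT)| by move=> h1 h2; rewrite h2 in h1.
apply: leq_trans (_ : #|[set root (adjS setT) x; root (adjS setT) s]| <= _).
  rewrite cards2; case: eqP => // /(rootP sym) h; by rewrite h in nc.
apply: subset_leq_card; apply/subsetP => y; rewrite !inE => /orP[]/eqP->;
  by rewrite /= roots_root.
Qed.


Lemma inside f x : (f \in side_e src dst e x) = (f == e) || (f != e) && R x (src f).
Proof. by rewrite !inE. Qed.

Lemma Rdst x f : f != e -> R x (src f) -> R x (dst f).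
Proof.
move=> fe h; apply: connect_trans h (connect1 _); apply/existsP; exists f.
by rewrite !inE fe !eqxx.
Qed.

Lemma colE k (F : {set E}) : k_colorableb src dst k F <-> exists c : {ffun E -> 'I_k},
  forall f g, f \in F -> g \in F -> f != g -> share_end src dst f g -> c f != c g.
Proof.
split.
  case/existsP => c /forall_inP H; exists c => f g hf hg ne se.
  by move: (H f hf) => /forall_inP /(_ g hg); rewrite ne se.
case=> c H; apply/existsP; exists c; apply/forall_inP => f hf; apply/forall_inP => g hg.
by apply/implyP => ne; apply/implyP; exact: H.
Qed.

Lemma col_sub k (F F' : {set E}) : F \subset F' -> k_colorableb src dst k F' -> k_colorableb src dst k F.
Proof.
move=> sub /colE[c H]; apply/colE; exists c => f g hf hg; apply: H; exact: (subsetP sub).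
Qed.

Lemma nu_ge k (S F : {set E}) : F \subset S -> k_colorableb src dst k F -> #|F| <= nu src dst k S.
Proof.
move=> h1 h2.
rewrite /nu; apply: (leq_bigmax_cond F); by rewrite h1 h2.
Qed.

Lemma nu_max k (S : {set E}) : 0 < k -> exists F : {set E}, [/\ F \subset S, k_colorableb src dst k F & nu src dst k S = #|F|].
Proof.
move=> k0; rewrite /nu (bigmax_eq_arg set0).
  case: arg_maxnP => [|F /andP[h1 h2] _]; last by exists F.
  rewrite sub0set /=; apply/colE; exists [ffun=> Ordinal k0] => f g; by rewrite inE.
rewrite sub0set /=; apply/colE; exists [ffun=> Ordinal k0] => f g; by rewrite inE.
Qed.

Section Sides.
Hypothesis Hsd : ~~ R s d.
Hypothesis Hc : forall x, R' x s.
Local Notation A := (side_e src dst e s).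
Local Notation B := (side_e src dst e d).

Lemma cover f : (f \in A) || (f \in B).
Proof.
rewrite !inside; case: eqP => //= fe; apply: fact1.
by rewrite (csym (adjS_sym setT)).
Qed.

Lemma disj f : f \in A -> f \in B -> f = e.
Proof.
rewrite !inside; case: eqP => //= _ h1 h2; case/negP: Hsd.
by apply: connect_trans h1 _; rewrite Rsym.
Qed.

Lemma noshare f g : f \in A -> g \in B -> f != e -> g != e -> ~~ share_end src dst f g.
Proof.
rewrite !inside => hf hg fe ge; rewrite (negbTE fe) (negbTE ge) /= in hf hg.
have hs : forall v, v = src f \/ v = dst f -> R s v.
  by move=> v [->|->] //; apply: Rdst.
have hd : forall v, v = src g \/ v = dst g -> R d v.
  by move=> v [->|->] //; apply: Rdst.
have key : forall u v, (u = src f \/ u = dst f) -> (v = src g \/ v = dst g) -> u <> v.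
  move=> u v hu hv uv; case/negP: Hsd; apply: connect_trans (hs u hu) _.
  by rewrite Rsym uv; apply: hd.
apply/negP; rewrite /share_end /incident => /orP[/orP[]|/orP[]] /eqP Eq.
- by apply: (key (src f) (src g)) => //; [left|left].
- by apply: (key (src f) (dst g)) => //; [left|right].
- by apply: (key (dst f) (src g)) => //; [right|left].
- by apply: (key (dst f) (dst g)) => //; [right|right].
Qed.

Lemma combD k (F1 F2 : {set E}) : F1 \subset A -> F2 \subset B ->
  e \notin F1 -> e \notin F2 ->
  k_colorableb src dst k F1 -> k_colorableb src dst k F2 ->
  k_colorableb src dst k (F1 :|: F2).
Proof.
move=> s1 s2 e1 e2 /colE[c1 H1] /colE[c2 H2]; apply/colE.
exists [ffun f => if f \in F1 then c1 f else c2 f] => f g; rewrite !inE !ffunE.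
have ne1 : forall x, x \in F1 -> x != e by move=> x hx; apply: contraNneq e1 => <-.
have ne2 : forall x, x \in F2 -> x != e by move=> x hx; apply: contraNneq e2 => <-.
case hf1: (f \in F1); case hg1: (g \in F1) => //= hf hg ne se.
- exact: H1.
- by move: (noshare (subsetP s1 _ hf1) (subsetP s2 _ hg) (ne1 _ hf1) (ne2 _ hg)); rewrite se.
- by move: (noshare (subsetP s1 _ hg1) (subsetP s2 _ hf) (ne1 _ hg1) (ne2 _ hf)); rewrite share_endC se.
- exact: H2.
Qed.

Lemma combC k (F1 F2 : {set E}) : F1 \subset A -> F2 \subset B ->
  e \in F1 -> e \in F2 ->
  k_colorableb src dst k F1 -> k_colorableb src dst k F2 ->
  k_colorableb src dst k (F1 :|: F2).
Proof.
move=> s1 s2 e1 e2 /colE[c1 H1] /colE[c2 H2]; apply/colE.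
exists [ffun f => if f \in F1 then c1 f else sw (c2 e) (c1 e) (c2 f)] => f g; rewrite !inE !ffunE.
have ne1 : forall x, x \notin F1 -> x != e by move=> x hx; apply: contraNneq hx => ->.
case hf1: (f \in F1); case hg1: (g \in F1) => //= hf hg ne se.
- exact: H1.
- have ge := ne1 g (negbT hg1).
  case: (f =P e) => [fe|fe].
    subst f; rewrite -{1}(swL (c2 e) (c1 e)) (inj_eq (@sw_inj _ _ _)); exact: H2.
  by move: (noshare (subsetP s1 _ hf1) (subsetP s2 _ hg) (introN eqP fe) ge); rewrite se.
- have fe := ne1 f (negbT hf1).
  case: (g =P e) => [ge|ge].
    subst g; rewrite -{2}(swL (c2 e) (c1 e)) (inj_eq (@sw_inj _ _ _)); exact: H2.
  by move: (noshare (subsetP s1 _ hg1) (subsetP s2 _ hf) (introN eqP ge) fe); rewrite share_endC se.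
- rewrite (inj_eq (@sw_inj _ _ _)); exact: H2.
Qed.

Lemma inter_le (X Y : {set E}) : X \subset A -> Y \subset B ->
  #|X :&: Y| <= (e \in X) && (e \in Y).
Proof.
move=> sX sY.
have h : X :&: Y \subset [set e].
  apply/subsetP => f; rewrite !inE => /andP[hx hy].
  by rewrite (disj (subsetP sX _ hx) (subsetP sY _ hy)).
case: (boolP ((e \in X) && (e \in Y))) => he.
  by apply: leq_trans (subset_leq_card h) _; rewrite cards1; case: (_ && _) he.
rewrite leqn0 cards_eq0; apply/eqP/setP => f; rewrite !inE; apply/negP => /andP[hx hy].
have fe := disj (subsetP sX _ hx) (subsetP sY _ hy); subst f.
by rewrite hx hy in he.
Qed.

End Sides.
End G.

Lemma ar1 u i a b N : u + i = a + b -> i <= 1 -> u <= N -> a + b <= N + 1.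
Proof. lia. Qed.
Lemma ar2 u i a a' b N : u + i = a' + b -> i <= 0 -> a = 1 + a' -> u <= N -> a + b <= N + 1.
Proof. lia. Qed.
Lemma ar3 u i a b b' N : u + i = a + b' -> i <= 0 -> b = 1 + b' -> u <= N -> a + b <= N + 1.
Proof. lia. Qed.

Theorem lemma7 (V E : finType) (src dst : E -> V) (k : nat) (e : E) :
  loopless src dst ->
  1 <= k ->
  connected_graph src dst ->
  is_bridge src dst e ->
  (exists H : {set E}, max_k_col_sub src dst k H /\ e \in H) ->
  nu src dst k [set: E] =
    nu src dst k (side_e src dst e (src e)) +
    nu src dst k (side_e src dst e (dst e)) - 1.
Proof.
move=> _ k0 hc hb [H [[Hcol Hnu] eH]].
have Hsd := bridge_nsd hb.
have Hc := @conn_all _ _ src dst e hc.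
set A := side_e src dst e (src e); set B := side_e src dst e (dst e).
have eA : e \in A by rewrite !inE eqxx.
have eB : e \in B by rewrite !inE eqxx.
have up : nu src dst k [set: E] + 1 <= nu src dst k A + nu src dst k B.
  have hU : H = (H :&: A) :|: (H :&: B).
    apply/setP => f; rewrite in_setU !in_setI; case: (f \in H) => //=; by rewrite (cover Hc).
  have hI : (H :&: A) :&: (H :&: B) = [set e].
    apply/setP => f; rewrite !in_setI in_set1; apply/idP/idP.
      by case/andP => /andP[_ fa] /andP[_ fb]; rewrite (disj Hsd fa fb).
    by move/eqP->; rewrite eH eA eB.
  have := cardsUI (H :&: A) (H :&: B); rewrite -hU hI cards1 -Hnu => ->.
  apply: leq_add; apply: nu_ge; rewrite ?subsetIr //; apply: col_sub Hcol; exact: subsetIl.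
have [F1 [s1 c1 n1]] := nu_max src dst A k0.
have [F2 [s2 c2 n2]] := nu_max src dst B k0.
have lo : nu src dst k A + nu src dst k B <= nu src dst k [set: E] + 1.
  rewrite n1 n2.
  case: (boolP (e \in F1)) => e1; case: (boolP (e \in F2)) => e2.
  - have := cardsUI F1 F2; have := inter_le Hsd s1 s2; rewrite e1 e2 /= => hi hu.
    exact: (ar1 hu hi (nu_ge (subsetT (F1 :|: F2)) (combC Hsd s1 s2 e1 e2 c1 c2))).
  - have s1' : F1 :\ e \subset A by apply: subset_trans s1; exact: subD1set.
    have := cardsUI (F1 :\ e) F2; have := inter_le Hsd s1' s2; rewrite (negbTE e2) andbF => hi hu.
    have := cardsD1 e F1; rewrite e1 => hd.
    exact: (ar2 hu hi hd (nu_ge (subsetT _) (combD Hsd s1' s2 (negbT (setD11 e F1)) e2 (col_sub (subD1set F1 e) c1) c2))).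
  - have s2' : F2 :\ e \subset B by apply: subset_trans s2; exact: subD1set.
    have := cardsUI F1 (F2 :\ e); have := inter_le Hsd s1 s2'; rewrite (negbTE e1) => hi hu.
    have := cardsD1 e F2; rewrite e2 => hd.
    exact: (ar3 hu hi hd (nu_ge (subsetT _) (combD Hsd s1 s2' e1 (negbT (setD11 e F2)) c1 (col_sub (subD1set F2 e) c2)))).
  - have := cardsUI F1 F2; have := inter_le Hsd s1 s2; rewrite (negbTE e1) => hi hu.
    exact: (ar1 hu (leq_trans hi (leq0n 1)) (nu_ge (subsetT _) (combD Hsd s1 s2 e1 e2 c1 c2))).
lia.
Qed.
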